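(* Let $e$ be the environment assigning to every type variable the relation $=_{\beta\eta}$. Then: (1) for every $\forall^+$ type $P$, $\llbracket P\rrbracket_e \subseteq\ =_{\beta\eta}$ (i.e. $t\,\llbracket P\rrbracket_e\,t'$ implies $t=_{\beta\eta}t'$); (2) for every $\forall^-$ type $N$, $=_{\beta\eta}\ \subseteq \llbracket N\rrbracket_e$ (i.e. $t=_{\beta\eta}t'$ implies $t\,\llbracket N\rrbracket_e\,t'$).
   Context: Terms are those of the pure untyped $\lambda$-calculus, $t ::= x \mid \lambda x.t \mid t\,t'$, up to $\alpha$-equivalence; $=_{\beta\eta}$ is $\beta\eta$-convertibility. Relational types are given by $R ::= X \mid R\to R' \mid \forall X.R \mid R^{\cup} \mid R\cdot R' \mid t$, where $X$ ranges over type variables and the last form is the promotion of a term $t$ to a type. A binary relation $r$ on terms is $\beta\eta$-closed if $t_1\,r\,t_2$, $t_1'=_{\beta\eta}t_1$, $t_2'=_{\beta\eta}t_2$ imply $t_1'\,r\,t_2'$; $\mathcal{R}$ is the set of such relations. An environment $\gamma$ maps type variables to elements of $\mathcal{R}$; $\gamma[X\mapsto r]$ is its update. The interpretation (written $t\,\llbracket R\rrbracket_\gamma\,t'$ for membership) is: $\llbracket X\rrbracket_\gamma=\gamma(X)$; $t\,\llbracket R\to R'\rrbracket_\gamma\,t'$ iff for all $a,a'$ with $a\,\llbracket R\rrbracket_\gamma\,a'$ we have $t\,a\,\llbracket R'\rrbracket_\gamma\,t'\,a'$; $\llbracket \forall X.R\rrbracket_\gamma=\bigcap_{r\in\mathcal{R}}\llbracket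 R\rrbracket_{\gamma[X\mapsto r]}$; $t\,\llbracket R^\cup\rrbracket_\gamma\,t'$ iff $t'\,\llbracket R\rrbracket_\gamma\,t$; $t\,\llbracket R\cdot R'\rrbracket_\gamma\,t'$ iff there is $t''$ with $t\,\llbracket R\rrbracket_\gamma\,t''$ and $t''\,\llbracket R'\rrbracket_\gamma\,t'$; $\llbracket \hat t\rrbracket_\gamma=\{(t,t')\mid \hat t\,t=_{\beta\eta}t'\}$ for a promoted term $\hat t$. Polarities are $p\in\{+,-\}$, with $\bar p$ the other polarity. The property $\forall^p$ of types is defined inductively: every type variable is $\forall^p$; if $R$ is $\forall^{\bar p}$ and $R'$ is $\forall^p$ then $R\to R'$ is $\forall^p$; if $R$ is $\forall^+$ then $\forall X.R$ is $\forall^+$; if $R$ is $\forall^p$ then $R^\cup$ is $\forall^p$; the promotion of a term $t$ with $t=_{\beta\eta}\lambda x.x$ is $\forall^p$ (no other types are $\forall^p$). *)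

(* Defs.v *)
From Stdlib Require Import Arith Relations.

Inductive tm : Type :=
| var : nat -> tm
| lam : tm -> tm
| app : tm -> tm -> tm.

Fixpoint lift (d c : nat) (t : tm) : tm :=
  match t with
  | var n => if n <? c then var n else var (n + d)
  | lam b => lam (lift d (S c) b)
  | app u v => app (lift d c u) (lift d c v)
  end.

Fixpoint subst (j : nat) (s : tm) (t : tm) : tm :=
  match t with
  | var n => if n =? j then s else if j <? n then var (pred n) else var n
  | lam b => lam (subst (S j) (lift 1 0 s) b)
  | app u v => app (subst j s u) (subst j s v)
  end.

Inductive step : tm -> tm -> Prop :=
| step_beta : forall b u, step (app (lam b) u) (subst 0 u b)
| step_eta : forall t, step (lam (app (lift 1 0 t) (var 0))) t
| step_lam : forall b b', step b b' -> step (lam b) (lam b')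
| step_appl : forall u u' v, step u u' -> step (app u v) (app u' v)
| step_appr : forall u v v', step v v' -> step (app u v) (app u v').

Definition bconv : tm -> tm -> Prop := clos_refl_sym_trans tm step.

Definition rel := tm -> tm -> Prop.

Definition bclosed (r : rel) : Prop :=
  forall t1 t2 t1' t2', r t1 t2 -> bconv t1' t1 -> bconv t2' t2 -> r t1' t2'.

Inductive rtype : Type :=
| TVar : nat -> rtype
| Arr : rtype -> rtype -> rtype
| All : nat -> rtype -> rtype
| Conv : rtype -> rtype
| Comp : rtype -> rtype -> rtype
| Prom : tm -> rtype.

Definition env := nat -> rel.

Definition upd (g : env) (X : nat) (r : rel) : env :=
  fun Y => if Y =? X then r else g Y.

Fixpoint interp (g : env) (R : rtype) : rel :=
  match R with
  | TVar X => g X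
  | Arr R1 R2 => fun t t' =>
      forall a a', interp g R1 a a' -> interp g R2 (app t a) (app t' a')
  | All X R1 => fun t t' =>
      forall r : rel, bclosed r -> interp (upd g X r) R1 t t'
  | Conv R1 => fun t t' => interp g R1 t' t
  | Comp R1 R2 => fun t t' =>
      exists t'', interp g R1 t t'' /\ interp g R2 t'' t'
  | Prom s => fun t t' => bconv (app s t) t'
  end.

Inductive pol : Type := Pos | Neg.

Definition opp (p : pol) : pol := match p with Pos => Neg | Neg => Pos end.

Inductive forallp : pol -> rtype -> Prop :=
| fp_var : forall p X, forallp p (TVar X)
| fp_arr : forall p R R', forallp (opp p) R -> forallp p R' -> forallp p (Arr R R')
| fp_all : forall X R, forallp Pos R -> forallp Pos (All X R)
| fp_conv : forall p R, forallp p R -> forallp p (Conv R)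
| fp_prom : forall p t, bconv t (lam (var 0)) -> forallp p (Prom t).

Definition e_bconv : env := fun _ => bconv.

(* Main.v *)
Require Import Defs.
From Stdlib Require Import Arith Relations Lia.

Lemma lift_lift : forall t d j c, j <= c ->
  lift d (S c) (lift 1 j t) = lift 1 j (lift d c t).
Proof.
  induction t; intros d j c H; simpl.
  - destruct (n <? j) eqn:E1; destruct (n <? c) eqn:E2; simpl;
      repeat match goal with
      | |- context [?a <? ?b] => destruct (a <? b) eqn:?
      end;
      repeat match goal with H : (_ <? _) = _ |- _ =>
        first [apply Nat.ltb_lt in H | apply Nat.ltb_ge in H] end;
      f_equal; lia.
  - f_equal. apply IHt. lia.
  - f_equal; auto.
Qed.

Lemma lift_subst_ge : forall t d c j s, c <= j ->
  lift d c (subst j s t) = subst (j + d) (lift d c s) (lift d c t).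
Proof.
  induction t; intros d c j s H; simpl.
  - destruct (n =? j) eqn:E0.
    + apply Nat.eqb_eq in E0; subst.
      destruct (j <? c) eqn:E1; [apply Nat.ltb_lt in E1; lia|].
      simpl. rewrite Nat.eqb_refl. reflexivity.
    + apply Nat.eqb_neq in E0.
      destruct (j <? n) eqn:E1; simpl;
      repeat match goal with
      | |- context [?a <? ?b] => destruct (a <? b) eqn:?
      | |- context [?a =? ?b] => destruct (a =? b) eqn:?
      end; simpl;
      repeat match goal with
      | H : (_ <? _) = _ |- _ =>
        first [apply Nat.ltb_lt in H | apply Nat.ltb_ge in H]
      | H : (_ =? _) = _ |- _ =>
        first [apply Nat.eqb_eq in H | apply Nat.eqb_neq in H] end;
      try (f_equal; lia); try lia;
      repeat match goal with
      | |- context [?a <? ?b] => destruct (a <? b) eqn:?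
      | |- context [?a =? ?b] => destruct (a =? b) eqn:?
      end;
      repeat match goal with
      | H : (_ <? _) = _ |- _ =>
        first [apply Nat.ltb_lt in H | apply Nat.ltb_ge in H]
      | H : (_ =? _) = _ |- _ =>
        first [apply Nat.eqb_eq in H | apply Nat.eqb_neq in H] end;
      try (f_equal; lia); try lia.
  - f_equal. rewrite IHt by lia. f_equal.
    rewrite <- lift_lift by lia. reflexivity.
  - f_equal; auto.
Qed.

Lemma lift_subst_le : forall t d c j s, j <= c ->
  lift d c (subst j s t) = subst j (lift d c s) (lift d (S c) t).
Proof.
  induction t; intros d c j s H; simpl.
  - repeat match goal with
      | |- context [?a <? ?b] => destruct (a <? b) eqn:?
      | |- context [?a =? ?b] => destruct (a =? b) eqn:?
      end; simpl;
      repeat match goal with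
      | H : (_ <? _) = _ |- _ =>
        first [apply Nat.ltb_lt in H | apply Nat.ltb_ge in H]
      | H : (_ =? _) = _ |- _ =>
        first [apply Nat.eqb_eq in H | apply Nat.eqb_neq in H] end;
      try (f_equal; lia); try lia;
      repeat match goal with
      | |- context [?a <? ?b] => destruct (a <? b) eqn:?
      | |- context [?a =? ?b] => destruct (a =? b) eqn:?
      end;
      repeat match goal with
      | H : (_ <? _) = _ |- _ =>
        first [apply Nat.ltb_lt in H | apply Nat.ltb_ge in H]
      | H : (_ =? _) = _ |- _ =>
        first [apply Nat.eqb_eq in H | apply Nat.eqb_neq in H] end;
      try (f_equal; lia); try lia; try reflexivity; subst; try lia.
  - f_equal. rewrite IHt by lia. f_equal.
    rewrite lift_lift by lia. reflexivity.
  - f_equal; auto.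
Qed.

Ltac crunch :=
  repeat (repeat match goal with
      | |- context [?a <? ?b] => destruct (a <? b) eqn:?
      | |- context [?a =? ?b] => destruct (a =? b) eqn:?
      end; simpl;
      repeat match goal with
      | H : (_ <? _) = _ |- _ =>
        first [apply Nat.ltb_lt in H | apply Nat.ltb_ge in H]
      | H : (_ =? _) = _ |- _ =>
        first [apply Nat.eqb_eq in H | apply Nat.eqb_neq in H] end);
  try (f_equal; lia); try lia; try reflexivity.

Lemma subst_lift_cancel : forall t i w, subst i w (lift 1 i t) = t.
Proof.
  induction t; intros i w; simpl.
  - crunch.
  - f_equal; auto.
  - f_equal; auto.
Qed.

Lemma subst_subst : forall b i j s u, i <= j ->
  subst j s (subst i u b) = subst i (subst j s u) (subst (S j) (lift 1 i s) b).
Proof.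
  induction b; intros i j s u H; simpl.
  - crunch; subst; try lia; simpl; crunch;
      try (symmetry; apply subst_lift_cancel).
  - f_equal. rewrite IHb by lia. f_equal.
    + rewrite lift_subst_ge by lia. f_equal. lia.
    + f_equal. apply lift_lift. lia.
  - f_equal; auto.
Qed.

Lemma step_lift : forall u v, step u v -> forall d c, step (lift d c u) (lift d c v).
Proof.
  induction 1; intros d c; simpl.
  - rewrite lift_subst_le by lia. constructor.
  - replace (lift d (S c) (lift 1 0 t)) with (lift 1 0 (lift d c t))
      by (symmetry; apply lift_lift; lia). constructor.
  - constructor; auto.
  - constructor; auto.
  - constructor; auto.
Qed.

Lemma step_subst : forall u v, step u v -> forall j s, step (subst j s u) (subst j s v).
Proof.
  induction 1; intros j s; simpl.
  - rewrite subst_subst by lia. constructor.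
  - replace (subst (S j) (lift 1 0 s) (lift 1 0 t)) with (lift 1 0 (subst j s t)).
    + constructor.
    + rewrite lift_subst_ge by lia. f_equal. lia.
  - constructor; auto.
  - constructor; auto.
  - constructor; auto.
Qed.

Lemma bconv_map : forall f : tm -> tm, (forall u v, step u v -> step (f u) (f v)) ->
  forall u v, bconv u v -> bconv (f u) (f v).
Proof.
  intros f Hf u v H. induction H.
  - apply rst_step; auto.
  - apply rst_refl.
  - apply rst_sym; auto.
  - eapply rst_trans; eauto.
Qed.

Lemma bconv_app : forall u u' v v', bconv u u' -> bconv v v' -> bconv (app u v) (app u' v').
Proof.
  intros. eapply rst_trans.
  - apply (bconv_map (fun x => app x v)); [intros; constructor; auto | eauto].
  - apply (bconv_map (fun x => app u' x)); [intros; constructor; auto | eauto].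
Qed.

Fixpoint fvb (n : nat) (t : tm) : Prop :=
  match t with
  | var k => k < n
  | lam b => fvb (S n) b
  | app u v => fvb n u /\ fvb n v
  end.

Lemma fvb_mono : forall t n m, fvb n t -> n <= m -> fvb m t.
Proof.
  induction t; simpl; intros.
  - lia.
  - eapply IHt; eauto; lia.
  - destruct H; split; eauto.
Qed.

Lemma fvb_ex : forall t, exists n, fvb n t.
Proof.
  induction t; simpl.
  - exists (S n). lia.
  - destruct IHt as [n H]. exists n. eapply fvb_mono; eauto.
  - destruct IHt1 as [n1 H1]. destruct IHt2 as [n2 H2]. exists (n1 + n2).
    split; eapply fvb_mono; eauto; lia.
Qed.

Lemma fvb_lift : forall t n d c, fvb n t -> fvb (n + d) (lift d c t).
Proof.
  induction t; simpl; intros.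
  - crunch.
  - apply (IHt (S n)); auto.
  - destruct H; split; auto.
Qed.

Lemma fvb_subst : forall t n j s, fvb n t -> n <= j -> subst j s t = t.
Proof.
  induction t; simpl; intros.
  - crunch.
  - f_equal. eapply IHt; eauto. lia.
  - destruct H; f_equal; eauto.
Qed.

Lemma ext_conv : forall t t', (forall a, bconv (app t a) (app t' a)) -> bconv t t'.
Proof.
  intros t t' H.
  destruct (fvb_ex t) as [n1 H1]. destruct (fvb_ex t') as [n2 H2].
  set (n := n1 + n2).
  assert (Ht : fvb n t) by (eapply fvb_mono; eauto; lia).
  assert (Ht' : fvb n t') by (eapply fvb_mono; eauto; lia).
  specialize (H (var n)).
  apply (bconv_map (lift 1 0)) in H; [| intros; apply step_lift; auto].
  apply (bconv_map (subst (S n) (var 0))) in H; [| intros; apply step_subst; auto].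
  simpl in H.
  rewrite (fvb_subst (lift 1 0 t) (n + 1)) in H by (auto using fvb_lift; lia).
  rewrite (fvb_subst (lift 1 0 t') (n + 1)) in H by (auto using fvb_lift; lia).
  replace (n + 1 =? S n) with true in H by (symmetry; apply Nat.eqb_eq; lia).
  apply (bconv_map lam) in H; [| intros; constructor; auto].
  eapply rst_trans; [apply rst_sym, rst_step, step_eta|].
  eapply rst_trans; [exact H|].
  apply rst_step, step_eta.
Qed.

Definition good (g : env) := forall Y a b, g Y a b <-> bconv a b.

Lemma main : forall p R, forallp p R -> forall g, good g ->
  match p with
  | Pos => forall t t', interp g R t t' -> bconv t t'
  | Neg => forall t t', bconv t t' -> interp g R t t'
  end.
Proof.
  induction 1; intros g Hg.
  - destruct p; simpl; intros; [apply (proj1 (Hg X _ _)) | apply (proj2 (Hg X _ _))]; auto.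
  - destruct p; simpl in *.
    + intros t t' Hi. apply ext_conv. intros a.
      apply (IHforallp2 g Hg). apply Hi. apply (IHforallp1 g Hg). apply rst_refl.
    + intros t t' Hc a a' Ha. apply (IHforallp2 g Hg).
      apply bconv_app; auto. apply (IHforallp1 g Hg); auto.
  - simpl. intros t t' Hi.
    assert (Hb : bclosed bconv).
    { intros t1 t2 t1' t2' H1 H2 H3. eapply rst_trans; [exact H2|].
      eapply rst_trans; [exact H1|]. apply rst_sym; auto. }
    specialize (Hi bconv Hb).
    apply (IHforallp (upd g X bconv)); auto.
    intros Y a b. unfold upd. destruct (Y =? X); [tauto | exact (Hg _ _ _)].
  - destruct p; simpl; intros t t' Hc.
    + apply rst_sym. apply (IHforallp g Hg); auto.
    + apply (IHforallp g Hg). apply rst_sym; auto.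
  - assert (Hid : forall u, bconv (app t u) u).
    { intros u. eapply rst_trans.
      - apply bconv_app; [exact H | apply rst_refl].
      - apply rst_step. apply (step_beta (var 0) u). }
    destruct p; simpl; intros u u' Hc.
    + eapply rst_trans; [apply rst_sym, Hid | exact Hc].
    + eapply rst_trans; [apply Hid | exact Hc].
Qed.

Theorem mainTheorem1 :
  (forall P : rtype, forallp Pos P ->
     forall t t' : tm, interp e_bconv P t t' -> bconv t t') /\
  (forall N : rtype, forallp Neg N ->
     forall t t' : tm, bconv t t' -> interp e_bconv N t t').
Proof.
  assert (Hg : good e_bconv) by (intros Y a b; unfold e_bconv; tauto).
  split.
  - intros P HP. exact (main Pos P HP e_bconv Hg).
  - intros N HN. exact (main Neg N HN e_bconv Hg).
Qed.
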